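(* Let $O$ be a set of Boolean functions. The following are equivalent: (1) $O\preceq\{\land,\lor,\top,\bot\}$ or $O\preceq\{\neg,\bot\}$. (2) Every formula $\phi\in\mathrm{PL}_O$ is uniquely characterized with respect to $\mathrm{PL}_O$ by a finite set of labeled examples. (3) There is a function $f:\mathbb{N}\to\mathbb{N}$ such that for all finite sets $\textsc{prop}$ of propositional variables, every $\phi\in\mathrm{PL}_O[\textsc{prop}]$ is uniquely characterized with respect to $\mathrm{PL}_O[\textsc{prop}]$ by a set of $f(|\phi|_{\mathrm{dag}})$ labeled examples.
   Context: A Boolean function is a map $\{0,1\}^n\to\{0,1\}$ with $n\ge 1$; the constants $\top,\bot$ are treated as constant unary Boolean functions. $\land,\lor,\neg$ denote the usual Boolean functions $x\land y$, $x\lor y$, $\neg x$. For a set $O$ of Boolean functions, $\langle O\rangle$ (the clone generated by $O$) is the smallest set of Boolean functions containing $O$ and all projections $\pi^n_k(x_1,\dots,x_n)=x_k$ and closed under composition; $O\preceq O'$ means $\langle O\rangle\subseteq\langle O'\rangle$. Fix a countably infinite set of propositional variables. $\mathrm{PL}_O$ is the set of formulas generated by $\phi::=x\mid f(\phi_1,\dots,\phi_n)$ with $x$ a propositional variable and $f\in O$ of arity $n$; $\mathrm{PL}_O[\textsc{prop}]$ consists of the $\mathrm{PL}_O$-formulas using only variables from $\textsc{prop}$. Given a truth assignment $V$, $[\![x]\!]_V=V(x)$ and $[\![f(\phi_1,\dots,\phi_n)]\!]_V=f([\![\phi_1]\!]_V,\dots,[\![\phi_n]\!]_V)$; two formulas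 are equivalent if they have the same value under every assignment. $|\phi|_{\mathrm{dag}}$ is the number of distinct subformulas of $\phi$. A labeled example is a pair $(V,\mathrm{lab})$ with $V$ a truth assignment and $\mathrm{lab}\in\{0,1\}$; $\phi$ fits it if $[\![\phi]\!]_V=\mathrm{lab}$. A set $E$ of labeled examples uniquely characterizes $\phi$ with respect to a set of formulas $L$ (here $L=\mathrm{PL}_O$ or $L=\mathrm{PL}_O[\textsc{prop}]$) if $\phi$ fits every example in $E$ and every formula of $L$ fitting every example in $E$ is equivalent to $\phi$. *)

(* Defs.v *)
From mathcomp Require Import all_boot.
From Stdlib Require List.
From HB Require Import structures.
Set Implicit Arguments. Unset Strict Implicit. Unset Printing Implicit Defensive.

(* Boolean functions {0,1}^n -> {0,1} with n >= 1.  A Boolean function is a *)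
(* dependent pair (k, g) with g a finite function on (k+1)-tuples of bools;  *)
(* its arity is k+1 (this encodes the convention n >= 1).                    *)
Definition BF := {k : nat & {ffun k.+1.-tuple bool -> bool}}.

Definition arity (f : BF) : nat := (tag f).+1.

Definition mkBF (k : nat) (g : {ffun k.+1.-tuple bool -> bool}) : BF :=
  Tagged (fun k => {ffun k.+1.-tuple bool -> bool}) g.

(* application of a Boolean function to a sequence of arguments (meaningful *)
(* only when the sequence has the right length; false otherwise)            *)
Definition bf_apply (f : BF) (s : seq bool) : bool :=
  match insub s : option ((tag f).+1.-tuple bool) with
  | Some t => tagged f t
  | None => false
  end.

Definition bf_and : BF := @mkBF 1 [ffun x => tnth x ord0 && tnth x ord_max].
Definition bf_or  : BF := @mkBF 1 [ffun x => tnth x ord0 || tnth x ord_max].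
Definition bf_not : BF := @mkBF 0 [ffun x => ~~ tnth x ord0].
Definition bf_top : BF := @mkBF 0 [ffun _ => true].
Definition bf_bot : BF := @mkBF 0 [ffun _ => false].

Definition bf_proj (m : nat) (k : 'I_m.+1) : BF := @mkBF m [ffun x => tnth x k].

Definition bf_comp (f : BF) (m : nat)
    (gs : 'I_(arity f) -> {ffun m.+1.-tuple bool -> bool}) : BF :=
  @mkBF m [ffun x => tagged f [tuple gs i x | i < arity f]].

Inductive clone (O : BF -> Prop) : BF -> Prop :=
| clone_base f : O f -> clone O f
| clone_proj m (k : 'I_m.+1) : clone O (bf_proj k)
| clone_comp (f : BF) (m : nat)
    (gs : 'I_(arity f) -> {ffun m.+1.-tuple bool -> bool}) :
    clone O f -> (forall i, clone O (mkBF (gs i))) -> clone O (bf_comp gs).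

Definition clone_le (O O' : BF -> Prop) : Prop :=
  forall f, clone O f -> clone O' f.

Definition set_and_or_top_bot : BF -> Prop :=
  fun f => f = bf_and \/ f = bf_or \/ f = bf_top \/ f = bf_bot.
Definition set_not_bot : BF -> Prop :=
  fun f => f = bf_not \/ f = bf_bot.

Inductive form : Type :=
| Var of nat
| App of BF & seq form.

Section FormInd.
Variable P : form -> Prop.
Hypothesis HV : forall x, P (Var x).
Hypothesis HA : forall f args, List.Forall P args -> P (App f args).
Fixpoint form_ind2 (p : form) : P p :=
  match p with
  | Var x => HV x
  | App f args => HA f
      ((fix go (l : seq form) : List.Forall P l :=
          match l with
          | [::] => List.Forall_nil P
          | a :: l' => List.Forall_cons a (form_ind2 a) (go l')
          end) args)
  end.
End FormInd.

Fixpoint form_eqb (p q : form) : bool :=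
  match p, q with
  | Var x, Var y => x == y
  | App f ps, App g qs => (f == g) && all2 form_eqb ps qs
  | _, _ => false
  end.

Lemma form_eqb_iff (p q : form) : form_eqb p q <-> p = q.
Proof.
elim/form_ind2: p q => [x|f ps IH] [y|g qs] /=; try by split.
- by split=> [/eqP->|[->]].
- have H : all2 form_eqb ps qs <-> ps = qs.
    elim: IH qs => [|a l Ha _ IHl] [|b l'] //=.
    split=> [/andP[/Ha -> /IHl ->]//|[<- <-]].
    by apply/andP; split; [apply/Ha|apply/IHl].
  split=> [/andP[/eqP -> /H ->]//|[-> E]].
  by apply/andP; split; [|apply/H].
Qed.

Lemma form_eqP : Equality.axiom form_eqb.
Proof. by move=> p q; apply: (iffP idP) => /form_eqb_iff. Qed.

HB.instance Definition _ := hasDecEq.Build form form_eqP.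

Fixpoint eval (V : nat -> bool) (p : form) : bool :=
  match p with
  | Var x => V x
  | App f args => bf_apply f (map (eval V) args)
  end.

Definition equiv (p q : form) : Prop := forall V, eval V p = eval V q.

Fixpoint inPL (O : BF -> Prop) (p : form) : Prop :=
  match p with
  | Var _ => True
  | App f args => [/\ O f, size args = arity f
                    & foldr (fun a acc => inPL O a /\ acc) True args]
  end.

Fixpoint vars (p : form) : seq nat :=
  match p with
  | Var x => [:: x]
  | App _ args => flatten (map vars args)
  end.

(* membership in PL_O[prop], for a finite set prop given as a list *)
Definition inPLprop (O : BF -> Prop) (prop : seq nat) (p : form) : Prop :=
  inPL O p /\ {subset vars p <= prop}.

Fixpoint subforms (p : form) : seq form :=
  match p with
  | Var x => [:: Var x]
  | App f args => App f args :: flatten (map subforms args)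
  end.

Definition dag_size (p : form) : nat := size (undup (subforms p)).

Definition example := ((nat -> bool) * bool)%type.

Definition fits (p : form) (e : example) : bool := eval e.1 p == e.2.

Definition uniquely_characterizes (E : seq example) (p : form)
    (L : form -> Prop) : Prop :=
  all (fits p) E /\ (forall q, L q -> all (fits q) E -> equiv q p).

(* Main.v *)
Require Import Defs.
From mathcomp Require Import all_boot.
From Stdlib Require Import Classical.
Set Implicit Arguments. Unset Strict Implicit. Unset Printing Implicit Defensive.

Fixpoint subst (s : nat -> form) (p : form) : form :=
  match p with
  | Var x => s x
  | App f args => App f (map (subst s) args)
  end.

Lemma Forall_mem (P : form -> Prop) l : List.Forall P l -> forall x, x \in l -> P x.
Proof. elim=> // a l' Ha _ IH x; rewrite inE => /orP[/eqP->//|]; exact: IH. Qed.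

Lemma eval_subst V s p : eval V (subst s p) = eval (fun j => eval V (s j)) p.
Proof.
elim/form_ind2: p => [x//|f args IH] /=; f_equal.
rewrite -map_comp; elim: IH => //= a l Ha _ IHl; by rewrite Ha IHl.
Qed.

Lemma eval_ext V W p : (forall j, V j = W j) -> eval V p = eval W p.
Proof.
move=> E; elim/form_ind2: p => [x//|f args IH] /=; f_equal.
elim: IH => //= a l Ha _ IHl; by rewrite Ha IHl.
Qed.

Lemma eval_vars V W p : (forall j, j \in vars p -> V j = W j) -> eval V p = eval W p.
Proof.
elim/form_ind2: p => [x /= E|f args IH /= E]; first by apply: E; rewrite inE.
f_equal; elim: IH E => //= a l Ha _ IHl E.
rewrite Ha ?IHl // => j Hj; apply: E; rewrite mem_cat Hj ?orbT //.
Qed.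

Lemma foldr_mem O l : foldr (fun a acc => inPL O a /\ acc) True l <-> (forall a, a \in l -> inPL O a).
Proof.
elim: l => [|b l IH] /=; first by split=> // _ _ ? ; rewrite in_nil.
split=> [[Hb /IH H] a|H]; first by rewrite inE => /orP[/eqP->//|/H].
split; first by apply: H; rewrite inE eqxx.
apply/IH => a Ha; apply: H; by rewrite inE Ha orbT.
Qed.

Lemma inPL_subst O s p : inPL O p -> (forall j, inPL O (s j)) -> inPL O (subst s p).
Proof.
move=> Hp Hs; elim/form_ind2: p Hp => [x _|f args IH [Of Sz Fa]] //=.
split=> //; first by rewrite size_map.
apply/foldr_mem => a /mapP[b Hb ->]. apply: (Forall_mem IH Hb). by move/foldr_mem: Fa; apply.
Qed.

Lemma vars_subst s p (P : nat -> Prop) :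
  (forall i j, j \in vars (s i) -> P j) -> forall j, j \in vars (subst s p) -> P j.
Proof.
move=> H; elim/form_ind2: p => [x|f args IH] j /=; first by apply: H.
move/flattenP=> [l /mapP[a /mapP[b Hb ->] ->]] Hj.
exact: (Forall_mem IH Hb).
Qed.

Lemma bf_apply_tuple (f : BF) (s : seq bool) : size s = arity f ->
  bf_apply f s = tagged f [tuple nth false s i | i < arity f].
Proof.
move=> Hs; rewrite /bf_apply; case: insubP => [u _ Hu|]; last by rewrite Hs eqxx.
f_equal; apply: eq_from_tnth => i; rewrite tnth_mktuple -Hu (tnth_nth false) //.
Qed.

Lemma bf_and_E a b : bf_apply bf_and [:: a; b] = a && b.
Proof. by rewrite bf_apply_tuple //= ffunE !tnth_mktuple. Qed.
Lemma bf_or_E a b : bf_apply bf_or [:: a; b] = a || b.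
Proof. by rewrite bf_apply_tuple //= ffunE !tnth_mktuple. Qed.
Lemma bf_not_E a : bf_apply bf_not [:: a] = ~~ a.
Proof. by rewrite bf_apply_tuple //= ffunE !tnth_mktuple. Qed.
Lemma bf_top_E a : bf_apply bf_top [:: a] = true.
Proof. by rewrite bf_apply_tuple //= ffunE. Qed.
Lemma bf_bot_E a : bf_apply bf_bot [:: a] = false.
Proof. by rewrite bf_apply_tuple //= ffunE. Qed.

Definition rep (f : BF) (p : form) :=
  forall V, eval V p = tagged f [tuple V i | i < arity f].

Lemma clone_rep O f : clone O f -> exists p, inPL O p /\ rep f p.
Proof.
elim=> {f} [f Of|m k|f m gs _ [p [Hp Rp]] _ IH].
- exists (App f [seq Var i | i <- iota 0 (arity f)]); split.
  + split=> //; first by rewrite size_map size_iota.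
    by apply/foldr_mem => a /mapP[i _ ->].
  + move=> V.
    have -> : eval V (App f [seq Var i | i <- iota 0 (arity f)]) =
              bf_apply f [seq V i | i <- iota 0 (arity f)].
      by rewrite /= -map_comp.
    rewrite bf_apply_tuple ?size_map ?size_iota //.
    f_equal; apply: eq_from_tnth => i; rewrite !tnth_mktuple.
    by rewrite (nth_map 0) ?size_iota // nth_iota.
- exists (Var k); split=> // V /=; by rewrite ffunE tnth_mktuple.
- have [q Hq] := fin_all_exists IH.
  exists (subst (fun j => q (inord j)) p); split.
  + apply: inPL_subst => // j; by case: (Hq (inord j)).
  + move=> V; rewrite eval_subst Rp /= ffunE; f_equal.
    apply: eq_from_tnth => i; rewrite !tnth_mktuple inord_val.
    by case: (Hq i) => _ ->.
Qed.

Lemma tuple_inord n (t : n.+1.-tuple bool) : [tuple tnth t (inord i) | i < n.+1] = t.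
Proof. apply: eq_from_tnth => i; by rewrite tnth_mktuple inord_val. Qed.

Lemma formula_clone O p m : inPL O p ->
  clone O (@mkBF m [ffun t => eval (fun j => tnth t (inord j)) p]).
Proof.
elim/form_ind2: p => [x _|f args IH [Of Sz Fa]].
- have -> : @mkBF m [ffun t => eval (fun j => tnth t (inord j)) (Var x)] = @bf_proj m (inord x).
    by rewrite /bf_proj; f_equal; apply/ffunP => t; rewrite !ffunE.
  exact: clone_proj.
- pose gs := fun i : 'I_(arity f) => [ffun t : m.+1.-tuple bool =>
                 eval (fun j => tnth t (inord j)) (nth (Var 0) args i)].
  have -> : @mkBF m [ffun t => eval (fun j => tnth t (inord j)) (App f args)] = bf_comp gs.
    rewrite /bf_comp; f_equal; apply/ffunP => t; rewrite !ffunE /=.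
    rewrite bf_apply_tuple ?size_map //; f_equal; apply: eq_from_tnth => i.
    rewrite !tnth_mktuple ffunE (nth_map (Var 0)) // Sz //.
  apply: clone_comp; first exact: clone_base.
  move=> i; have Hi : nth (Var 0) args i \in args by rewrite mem_nth // Sz.
  apply: (Forall_mem IH Hi); by move/foldr_mem: Fa; apply.
Qed.

Lemma rep_clone O f p : inPL O p -> rep f p -> clone O f.
Proof.
move=> Hp Rp; have := formula_clone (tag f) Hp.
have -> : [ffun t => eval (fun j => tnth t (inord j)) p] = tagged f.
  apply/ffunP => t; rewrite ffunE Rp; f_equal; exact: tuple_inord.
by case: f {Rp}.
Qed.

Definition mono p := forall V W : nat -> bool, (forall j, V j -> W j) -> eval V p -> eval W p.
Definition eu p := exists y (u : bool -> bool), forall V : nat -> bool, eval V p = u (V y).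

Lemma args2 O f (args : seq form) : size args = arity f ->
  foldr (fun a acc => inPL O a /\ acc) True args -> arity f = 2 ->
  exists a b, args = [:: a; b] /\ inPL O a /\ inPL O b.
Proof.
move=> Sz Fa E; rewrite E in Sz; move: Fa Sz; case: args => [|a [|b [|]]] //= [Ha [Hb _]] _.
by exists a, b.
Qed.

Lemma args1 O f (args : seq form) : size args = arity f ->
  foldr (fun a acc => inPL O a /\ acc) True args -> arity f = 1 ->
  exists a, args = [:: a] /\ inPL O a.
Proof.
move=> Sz Fa E; rewrite E in Sz; move: Fa Sz; case: args => [|a [|]] //= [Ha _] _.
by exists a.
Qed.

Lemma Forall_in (P : form -> Prop) l x : List.Forall P l -> x \in l -> P x.
Proof. move=> H Hx; exact: Forall_mem H _ Hx. Qed.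

Lemma PLM_mono p : inPL set_and_or_top_bot p -> mono p.
Proof.
elim/form_ind2: p => [x _ V W H //=|f args IH [Of Sz Fa]]; first exact: H.
move=> V W H.
case: Of => [E|[E|[E|E]]]; subst f.
- have [a [b [Eab [Ha Hb]]]] := args2 Sz Fa (erefl _); rewrite Eab /= !bf_and_E.
  move: IH; rewrite Eab => /List.Forall_cons_iff [Ma /List.Forall_cons_iff [Mb _]].
  by move=> /andP[/(Ma Ha V W H) -> /(Mb Hb V W H) ->].
- have [a [b [Eab [Ha Hb]]]] := args2 Sz Fa (erefl _); rewrite Eab /= !bf_or_E.
  move: IH; rewrite Eab => /List.Forall_cons_iff [Ma /List.Forall_cons_iff [Mb _]].
  by move=> /orP[/(Ma Ha V W H) ->|/(Mb Hb V W H) ->]; rewrite ?orbT.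
- have [a [Ea Ha]] := args1 Sz Fa (erefl _); by rewrite Ea /= !bf_top_E.
- have [a [Ea Ha]] := args1 Sz Fa (erefl _); by rewrite Ea /= !bf_bot_E.
Qed.

Lemma PLN_eu p : inPL set_not_bot p -> eu p.
Proof.
elim/form_ind2: p => [x _|f args IH [Of Sz Fa]]; first by exists x, id.
case: Of => E; subst f.
- have [a [Ea Ha]] := args1 Sz Fa (erefl _).
  move: IH; rewrite Ea => /List.Forall_cons_iff [Ma _].
  have [y [u Hu]] := Ma Ha.
  exists y, (fun b => ~~ u b) => V; by rewrite /= bf_not_E Hu.
- have [a [Ea Ha]] := args1 Sz Fa (erefl _).
  exists 0, (fun _ => false) => V; by rewrite Ea /= bf_bot_E.
Qed.

Lemma list_choice O O' (args : seq form) :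
  List.Forall (fun q => inPL O q -> exists q', inPL O' q' /\ forall V, eval V q' = eval V q) args ->
  foldr (fun a acc => inPL O a /\ acc) True args ->
  exists args', size args' = size args /\ (forall a, a \in args' -> inPL O' a) /\
     forall V, map (eval V) args' = map (eval V) args.
Proof.
elim=> [|a l Ha _ IHl] /=; first by exists [::].
move=> [/Ha [a' [Ha' Ea]] /IHl [l' [Sl [Il El]]]].
exists (a' :: l'); split; first by rewrite /= Sl.
split; first by move=> b; rewrite inE => /orP[/eqP->//|/Il].
by move=> V /=; rewrite Ea El.
Qed.

Lemma translate O O' : (forall f, O f -> exists p, inPL O' p /\ rep f p) ->
  forall q, inPL O q -> exists q', inPL O' q' /\ forall V, eval V q' = eval V q.
Proof.
move=> HO; elim/form_ind2 => [x _|f args IH [Of Sz Fa]]; first by exists (Var x).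
have [args' [Sz' [I' E']]] := list_choice IH Fa.
have [p [Hp Rp]] := HO f Of.
exists (subst (fun j => nth (Var 0) args' j) p); split.
  apply: inPL_subst => // j; case: (ltnP j (size args')) => Hj.
    by apply: I'; rewrite mem_nth.
  by rewrite nth_default.
move=> V; rewrite eval_subst Rp /= -E' bf_apply_tuple ?size_map ?Sz' //.
f_equal; apply: eq_from_tnth => i; rewrite !tnth_mktuple (nth_map (Var 0)) // Sz' Sz //.
Qed.

Fixpoint pw (X : seq nat) : seq (seq nat) :=
  match X with
  | [::] => [:: [::]]
  | x :: X' => map (cons x) (pw X') ++ pw X'
  end.

Lemma size_pw X : size (pw X) = 2 ^ size X.
Proof. elim: X => //= x X IH; by rewrite size_cat size_map IH expnS mul2n addnn. Qed.

Lemma filter_pw (U : nat -> bool) X : filter U X \in pw X.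
Proof.
elim: X => [|x X IH] /=; first by rewrite inE.
rewrite mem_cat; case: (U x); last by rewrite IH orbT.
have inj : injective (cons x) by move=> a b [].
by rewrite mem_map ?IH.
Qed.

Definition VS (s : seq nat) : nat -> bool := fun z => z \in s.
Definition WS (X s : seq nat) : nat -> bool := fun z => (z \in s) || (z \notin X).

Definition exs (p : form) (X : seq nat) : seq example :=
  [seq (VS s, eval (VS s) p) | s <- pw X] ++ [seq (WS X s, eval (WS X s) p) | s <- pw X].

Lemma size_exs p X : size (exs p X) = 2 ^ (size X).+1.
Proof. by rewrite size_cat !size_map size_pw expnS mul2n addnn. Qed.

Definition between (X : seq nat) q := forall U : nat -> bool,
  eval U q = eval (VS (filter U X)) q \/ eval U q = eval (WS X (filter U X)) q.

Lemma mono_between X q : mono q -> between X q.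
Proof.
move=> Mq U.
have H1 : forall j, VS (filter U X) j -> U j by move=> j; rewrite /VS mem_filter => /andP[].
have H2 : forall j, U j -> WS X (filter U X) j.
  by move=> j Uj; rewrite /WS mem_filter Uj /=; case: (j \in X).
case E: (eval U q).
  by right; rewrite (Mq _ _ H2 E).
left; case E': (eval (VS (filter U X)) q) => //.
by rewrite -E (Mq _ _ H1 E').
Qed.

Lemma eu_between X q : eu q -> between X q.
Proof.
move=> [y [u Hu]] U; rewrite !Hu /VS /WS mem_filter.
case Hy: (y \in X); first by rewrite andbT; left.
by rewrite andbF /=; case: (U y); [right|left].
Qed.

Lemma exs_char p X (L : form -> Prop) :
  (forall j, j \in vars p -> j \in X) -> (forall q, L q -> between X q) ->
  uniquely_characterizes (exs p X) p L.
Proof.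
move=> HX HL; split.
  by rewrite all_cat !all_map; apply/andP; split; apply/allP => s _; rewrite /fits /= eqxx.
move=> q Lq; rewrite all_cat !all_map => /andP[/allP A1 /allP A2] U.
have B := HL q Lq U.
have F1 := A1 _ (filter_pw U X); have F2 := A2 _ (filter_pw U X).
rewrite /fits /= in F1 F2.
have E1 : eval (VS (filter U X)) p = eval U p.
  apply: eval_vars => j /HX Hj; by rewrite /VS mem_filter Hj andbT.
have E2 : eval (WS X (filter U X)) p = eval U p.
  apply: eval_vars => j /HX Hj; by rewrite /WS mem_filter Hj andbT orbF.
case: B => ->; [rewrite -E1|rewrite -E2]; exact/eqP.
Qed.

Lemma vars_subforms p x : x \in vars p -> Var x \in subforms p.
Proof.
elim/form_ind2: p => [y|f args IH] /=; first by rewrite !inE => /eqP->.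
move/flattenP=> [l /mapP[a Ha ->] Hx]; rewrite inE; apply/orP; right.
apply/flattenP; exists (subforms a); first by apply/mapP; exists a.
exact: (Forall_in IH Ha).
Qed.

Lemma vars_dag p : size (undup (vars p)) <= dag_size p.
Proof.
rewrite /dag_size -(size_map Var); apply: uniq_leq_size.
  rewrite map_inj_uniq ?undup_uniq //; by move=> a b [].
move=> s /mapP[x Hx ->]; rewrite mem_undup; apply: vars_subforms; by rewrite -mem_undup.
Qed.

Lemma c1_between O : clone_le O set_and_or_top_bot \/ clone_le O set_not_bot ->
  forall q, inPL O q -> forall X, between X q.
Proof.
move=> [H|H] q Hq X.
- have [q' [Hq' E]] : exists q', inPL set_and_or_top_bot q' /\ forall V, eval V q' = eval V q.
    apply: (translate _ Hq) => f Of; apply: clone_rep; apply: H; exact: clone_base.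
  apply: mono_between => V W HVW; rewrite -!E; exact: PLM_mono.
- have [q' [Hq' E]] : exists q', inPL set_not_bot q' /\ forall V, eval V q' = eval V q.
    apply: (translate _ Hq) => f Of; apply: clone_rep; apply: H; exact: clone_base.
  apply: eu_between; have [y [u Hu]] := PLN_eu Hq'; exists y, u => V; by rewrite -E.
Qed.

Inductive T3 := TX | TU | TV | TG of T3 & T3 & T3.

Fixpoint evalT (tb : bool -> bool -> bool -> bool) (x u v : bool) (t : T3) : bool :=
  match t with
  | TX => x | TU => u | TV => v
  | TG a b c => tb (evalT tb x u v a) (evalT tb x u v b) (evalT tb x u v c)
  end.

Definition env (x y z : bool) : nat -> bool :=
  fun j => if j == 1 then y else if j == 2 then z else x.

Fixpoint tf (g : form) (t : T3) : form :=
  match t with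
  | TX => Var 0 | TU => Var 1 | TV => Var 2
  | TG a b c => subst (fun j => if j == 1 then tf g b else if j == 2 then tf g c else tf g a) g
  end.

Lemma eval_tf g t U :
  eval U (tf g t) = evalT (fun x u v => eval (env x u v) g) (U 0) (U 1) (U 2) t.
Proof.
elim: t => //= a IHa b IHb c IHc; rewrite eval_subst -IHa -IHb -IHc.
apply: eval_ext => j; rewrite /env; by case: (j == 1); case: (j == 2).
Qed.

Lemma inPL_tf O g t : inPL O g -> inPL O (tf g t).
Proof.
move=> Hg; elim: t => //= a IHa b IHb c IHc; apply: inPL_subst => // j.
by case: (j == 1); case: (j == 2).
Qed.

Definition bools := [:: false; true].
Lemma mem_bools b : b \in bools. Proof. by case: b. Qed.

Definition cancT tb t : bool :=
  all (fun x => all (fun y => evalT tb x y y t == evalT tb x x x t) bools) bools &&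
  has (fun x => has (fun y => has (fun z => evalT tb x y z t != evalT tb x x x t) bools) bools) bools.

Definition negxb (tb : bool -> bool -> bool -> bool) : bool :=
  all (fun x => all (fun u => all (fun v => tb x u v == ~~ x) bools) bools) bools.

Definition Wl : seq T3 := [:: (TG TX TU TV); (TG TV (TG TU TU TX) TX); (TG TX TV (TG TU TX TX)); (TG TV TX TU); (TG TU TU TV); (TG (TG TX TU TX) TX TV); (TG TX TV (TG TX TU TU)); (TG (TG TX TU TX) TU TV); (TG TU (TG TX TX TU) TV); (TG (TG TX TX TU) TU TV); (TG TV (TG TX TX TU) TX); (TG (TG TU TX TU) TX TV); (TG TU TV TX); (TG TX (TG TX TX TU) TV); (TG (TG TX TX TU) TX TV) ].

Definition tabf (b0 b1 b2 b3 b4 b5 b6 b7 : bool) (x u v : bool) : bool :=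
  match x, u, v with
  | false, false, false => b0 | false, false, true => b1
  | false, true, false => b2 | false, true, true => b3
  | true, false, false => b4 | true, false, true => b5
  | true, true, false => b6 | true, true, true => b7
  end.

Lemma brute' (b0 b1 b2 b3 b4 b5 b6 b7 : bool) : b1 -> ~~ b5 ->
  negxb (tabf b0 b1 b2 b3 b4 b5 b6 b7) || has (cancT (tabf b0 b1 b2 b3 b4 b5 b6 b7)) Wl.
Proof. move: b0 b1 b2 b3 b4 b5 b6 b7; by do 8! case. Qed.

Lemma evalT_ext tb tb' : (forall x u v, tb x u v = tb' x u v) ->
  forall x u v t, evalT tb x u v t = evalT tb' x u v t.
Proof. move=> E x u v; elim=> //= a -> b -> c ->; exact: E. Qed.

Lemma brute (tb : bool -> bool -> bool -> bool) : tb false false true -> ~~ tb true false true ->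
  negxb tb || has (cancT tb) Wl.
Proof.
set tb' := tabf (tb false false false) (tb false false true) (tb false true false)
  (tb false true true) (tb true false false) (tb true false true) (tb true true false)
  (tb true true true).
have E : forall x u v, tb x u v = tb' x u v by do 3! case.
have -> : negxb tb = negxb tb' by rewrite /negxb /= !E.
have -> : has (cancT tb) Wl = has (cancT tb') Wl.
  apply: eq_has => t; by rewrite /cancT /= !(evalT_ext E).
exact: brute'.
Qed.

Definition Canc O := exists psi, inPL O psi /\
  (forall V : nat -> bool, V 1 = V 2 -> eval V psi = eval (fun _ => V 0) psi) /\
  exists x y z, eval (env x y z) psi != eval (fun _ => x) psi.

Definition mixenv (V W : nat -> bool) (x u v : bool) : nat -> bool :=
  fun j => if V j then v else if W j then x else u.

Lemma lemA O p (V W : nat -> bool) : inPL O p -> (forall j, V j -> W j) ->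
  eval V p -> ~~ eval W p ->
  Canc O \/ forall x u v, eval (mixenv V W x u v) p = ~~ x.
Proof.
move=> Hp HVW HV HW.
pose g := subst (fun j => Var (if V j then 2 else if W j then 0 else 1)) p.
have Hg : inPL O g by apply: inPL_subst.
pose tb := fun x u v => eval (env x u v) g.
have Etb : forall x u v, tb x u v = eval (mixenv V W x u v) p.
  move=> x u v; rewrite /tb eval_subst; apply: eval_ext => j /=.
  by rewrite /mixenv /env; case: (V j); case: (W j).
have H1 : tb false false true.
  rewrite Etb; rewrite (eval_ext _ (W := V)) // => j.
  by rewrite /mixenv; case: (V j); case: (W j).
have H2 : ~~ tb true false true.
  rewrite Etb; rewrite (eval_ext _ (W := W)) // => j.
  rewrite /mixenv; case Vj: (V j); first by rewrite (HVW j Vj).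
  by case: (W j).
case/orP: (brute H1 H2) => [Hn|Hh].
  right=> x u v; rewrite -Etb.
  have := allP Hn x (mem_bools x) => /allP /(_ u (mem_bools u)) /allP /(_ v (mem_bools v)).
  by move/eqP.
have [t /andP[C1 C2]] : exists t, cancT tb t.
  by elim: Wl Hh => //= a l IH /orP[Ha|/IH //]; exists a.
left; exists (tf g t); split; first exact: inPL_tf.
split.
  move=> U E; rewrite !eval_tf /= -E.
  have := allP C1 (U 0) (mem_bools _) => /allP /(_ (U 1) (mem_bools _)) /eqP.
  by rewrite /tb.
move/hasP: C2 => [x _ /hasP[y _ /hasP[z _ Hne]]].
by exists x, y, z; rewrite !eval_tf /=.
Qed.

Lemma not_mono p : ~ mono p -> exists V W : nat -> bool,
  (forall j, V j -> W j) /\ eval V p /\ ~~ eval W p.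
Proof.
move=> nm; apply: NNPP => H; apply: nm => V W HVW HV.
case E: (eval W p) => //; exfalso; apply: H; exists V, W; by rewrite E.
Qed.

Definition upd (V : nat -> bool) (i : nat) (b : bool) : nat -> bool :=
  fun j => if j == i then b else V j.

Lemma flip q : forall (L : seq nat) (V W : nat -> bool), (forall j, j \notin L -> V j = W j) ->
  (forall j, V j -> W j) -> eval V q -> ~~ eval W q ->
  exists V' i, ~~ V' i /\ eval V' q /\ ~~ eval (upd V' i true) q.
Proof.
elim=> [|a L IH] V W Hout HVW HV HW.
  have E : eval V q = eval W q by apply: eval_ext => j; apply: Hout.
  by rewrite -E HV in HW.
have Hout' : V a = W a -> forall j, j \notin L -> V j = W j.
  move=> E j Hj; case: (eqVneq j a) => [->//|ne]; apply: Hout.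
  by rewrite inE negb_or ne.
case Va: (V a); first by apply: (IH V W) => //; apply: Hout'; rewrite Va (HVW a Va).
case Wa: (W a); last by apply: (IH V W) => //; apply: Hout'; rewrite Va Wa.
case EM: (eval (upd V a true) q); last by exists V, a; rewrite Va EM.
apply: (IH (upd V a true) W) => //.
  move=> j Hj; rewrite /upd; case: (eqVneq j a) => [->//|ne].
  by apply: Hout; rewrite inE negb_or ne.
move=> j; rewrite /upd; case: (eqVneq j a) => [->//|ne]; exact: HVW.
Qed.

Lemma flip0 q (V W : nat -> bool) : (forall j, V j -> W j) -> eval V q -> ~~ eval W q ->
  exists V' i, ~~ V' i /\ eval V' q /\ ~~ eval (upd V' i true) q.
Proof.
move=> HVW HV HW.
pose W0 := fun j => if j \in vars q then W j else V j.
apply: (flip (L := vars q) (V := V) (W := W0)) => //.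
- by move=> j Hj; rewrite /W0 (negbTE Hj).
- by move=> j Vj; rewrite /W0; case: (j \in vars q) => //; apply: HVW.
- rewrite (eval_vars (W := W)) // => j Hj; by rewrite /W0 Hj.
Qed.

Lemma core O p1 p2 : inPL O p1 -> ~ mono p1 -> inPL O p2 -> ~ eu p2 -> Canc O.
Proof.
move=> Hp1 nm1 Hp2 ne2; apply: NNPP => nC.
have [V [W [HVW [HV HW]]]] := not_mono nm1.
have [//|Hneg] := lemA Hp1 HVW HV HW.
pose Nf := subst (fun _ => Var 0) p1.
have ENf : forall U, eval U Nf = ~~ U 0.
  move=> U; rewrite eval_subst /= -(Hneg (U 0) (U 0) (U 0)); apply: eval_ext => j.
  by rewrite /mixenv; case: (V j); case: (W j).
pose NEG p := subst (fun _ => p) Nf.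
have ENEG : forall U p, eval U (NEG p) = ~~ eval U p by move=> U p; rewrite eval_subst ENf.
have INEG : forall p, inPL O p -> inPL O (NEG p).
  move=> p Hp; apply: inPL_subst => //; exact: inPL_subst.
have [q [Hq [nmq neq]]] : exists q, inPL O q /\ ~ mono q /\ ~ eu q.
  case: (classic (mono p2)) => [m2|]; last by exists p2.
  exists (NEG p2); split; first exact: INEG.
  split; last first.
    move=> [y [u Hu]]; apply: ne2; exists y, (fun b => ~~ u b) => U.
    by rewrite -Hu ENEG negbK.
  have [V1 HV1] : exists V1, ~~ eval V1 p2.
    apply: NNPP => H; apply: ne2; exists 0, (fun _ => true) => U.
    by case E: (eval U p2) => //; exfalso; apply: H; exists U; rewrite E.
  have [W1 HW1] : exists W1, eval W1 p2.
    apply: NNPP => H; apply: ne2; exists 0, (fun _ => false) => U.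
    by case E: (eval U p2) => //; exfalso; apply: H; exists U; rewrite E.
  move=> mq.
  have HA : ~~ eval (fun j => V1 j && W1 j) p2.
    apply: contra HV1; apply: m2 => j /andP[] //.
  have := mq (fun j => V1 j && W1 j) W1 (fun j => fun H => (proj2 (andP H))).
  by rewrite !ENEG HA HW1 => /(_ erefl).
have [V2 [W2 [HVW2 [HV2 HW2]]]] := not_mono nmq.
have [V' [i [Vi [HV' HW']]]] := flip0 HVW2 HV2 HW2.
apply: neq; exists i, negb => Z.
pose M := upd Z i false.
pose xorf (U : nat -> bool) := fun j => if M j then ~~ U j else U j.
pose qM := subst (fun j => if M j then NEG (Var j) else Var j) q.
have EqM : forall U, eval U qM = eval (xorf U) q.
  move=> U; rewrite eval_subst; apply: eval_ext => j; rewrite /xorf.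
  by case: (M j); rewrite ?ENEG.
have IqM : inPL O qM by apply: inPL_subst => // j; case: (M j) => //; apply: INEG.
have Mi : M i = false by rewrite /M /upd eqxx.
have xx : forall U j, xorf (xorf U) j = U j by move=> U j; rewrite /xorf; case: (M j); rewrite ?negbK.
have HA : eval (xorf V') qM by rewrite EqM (eval_ext _ (W := V')).
have HB : ~~ eval (xorf (upd V' i true)) qM by rewrite EqM (eval_ext _ (W := upd V' i true)).
have HAB : forall j, xorf V' j -> xorf (upd V' i true) j.
  move=> j; rewrite /xorf /upd; case: (eqVneq j i) => [->|//]; by rewrite Mi (negbTE Vi).
have [//|Hn] := lemA IqM HAB HA HB.
rewrite -(Hn (Z i) false false) EqM; apply: eval_ext => j.
rewrite /xorf /mixenv /M /upd; case: (eqVneq j i) => [->|ne] /=.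
  by rewrite (negbTE Vi).
by case: (V' j); case: (Z j).
Qed.

Lemma map_all (E : seq example) a b :
  map (fun e : example => e.1 a) E = map (fun e : example => e.1 b) E ->
  all (fun e : example => e.1 a == e.1 b) E.
Proof. by elim: E => //= e E IH [-> /IH ->]; rewrite eqxx. Qed.

Lemma pigeon (E : seq example) (L : seq nat) : uniq L -> 2 ^ size E < size L ->
  exists a b, a \in L /\ b \in L /\ a != b /\ all (fun e : example => e.1 a == e.1 b) E.
Proof.
move=> uL sL.
pose col (j : nat) : (size E).-tuple bool := map_tuple (fun e : example => e.1 j) (in_tuple E).
have nu : ~~ uniq (map col L).
  apply/negP => u; move: sL; rewrite -(size_map col) -(card_uniqP u).
  have := max_card (mem (map col L)); rewrite card_tuple card_bool => H1 H2.
  by have := leq_ltn_trans H1 H2; rewrite ltnn.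
have [i [j [ij jL E']]] := uniqPn (col 0) nu.
rewrite size_map in jL.
have iL : i < size L by apply: ltn_trans ij jL.
rewrite !(nth_map 0) // in E'.
exists (nth 0 L i), (nth 0 L j); split; first exact: mem_nth.
split; first exact: mem_nth.
split; first by rewrite nth_uniq // neq_ltn ij.
apply: map_all; exact: (congr1 val E').
Qed.

Definition phiC psi := subst (fun _ => Var 0) psi.
Definition psiC psi (a b : nat) := subst (fun j => Var (if j == 1 then a else if j == 2 then b else 0)) psi.

Lemma contra_fits psi
  (C1 : forall V : nat -> bool, V 1 = V 2 -> eval V psi = eval (fun _ => V 0) psi)
  (E : seq example) a b : all (fun e : example => e.1 a == e.1 b) E ->
  all (fits (phiC psi)) E -> all (fits (psiC psi a b)) E.
Proof.
elim: E => //= e E IH /andP[/eqP Hab HE] /andP[He HE']; rewrite IH // andbT.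
move: He; rewrite /fits /phiC /psiC !eval_subst /=.
move=> H; rewrite C1 //=; exact: Hab.
Qed.

Lemma contra_equiv psi (x y z : bool)
  (C2 : eval (env x y z) psi != eval (fun _ => x) psi) a b :
  a != 0 -> b != 0 -> a != b -> ~ Defs.equiv (psiC psi a b) (phiC psi).
Proof.
move=> a0 b0 ab E.
pose V' := fun j => if j == a then y else if j == b then z else x.
have := E V'; rewrite /psiC /phiC !eval_subst /=.
have -> : V' 0 = x by rewrite /V' eq_sym (negbTE a0) eq_sym (negbTE b0).
rewrite (eval_ext _ (W := env x y z)) => [H|j]; first by move: C2; rewrite H eqxx.
rewrite /V' /env; case: (j == 1); first by rewrite eqxx.
case: (j == 2); first by rewrite eq_sym (negbTE ab) eqxx.
by rewrite eq_sym (negbTE a0) eq_sym (negbTE b0).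
Qed.

Lemma canc_not_c2 O : Canc O ->
  ~ (forall p, inPL O p -> exists E : seq example, uniquely_characterizes E p (inPL O)).
Proof.
move=> [psi [Hpsi [C1 [x [y [z C2]]]]]] H.
have Hphi : inPL O (phiC psi) by apply: inPL_subst.
have [E [F1 F2]] := H _ Hphi.
have sz : 2 ^ size E < size (iota 1 (2 ^ size E).+1) by rewrite size_iota.
have [a [b [aL [bL [ab Hab]]]]] := @pigeon E (iota 1 (2 ^ size E).+1) (iota_uniq _ _) sz.
have a0 : a != 0 by move: aL; rewrite mem_iota; case: (a) => //.
have b0 : b != 0 by move: bL; rewrite mem_iota; case: (b) => //.
apply: (contra_equiv C2 a0 b0 ab); apply: F2.
  apply: inPL_subst => // j.
exact: contra_fits.
Qed.

Lemma canc_not_c3 O : Canc O ->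
  ~ (exists f : nat -> nat, forall (prop : seq nat) (p : form),
       inPLprop O prop p ->
       exists E : seq example, size E <= f (dag_size p) /\
         uniquely_characterizes E p (inPLprop O prop)).
Proof.
move=> [psi [Hpsi [C1 [x [y [z C2]]]]]] [f H].
set k := f (dag_size (phiC psi)).
pose prop := iota 0 (2 ^ k).+2.
have Hphi : inPLprop O prop (phiC psi).
  split; first by apply: inPL_subst.
  move=> j; apply: (vars_subst (P := fun j => j \in prop)) => i l.
  by rewrite inE => /eqP->; rewrite mem_iota.
have [E [SE [F1 F2]]] := H _ _ Hphi.
have sz : 2 ^ size E < size (iota 1 (2 ^ k).+1) by rewrite size_iota ltnS leq_pexp2l.
have [a [b [aL [bL [ab Hab]]]]] := @pigeon E (iota 1 (2 ^ k).+1) (iota_uniq _ _) sz.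
have a0 : a != 0 by move: aL; rewrite mem_iota; case: (a) => //.
have b0 : b != 0 by move: bL; rewrite mem_iota; case: (b) => //.
apply: (contra_equiv C2 a0 b0 ab); apply: F2; last exact: contra_fits.
split; first by apply: inPL_subst => // j.
move=> j; apply: (vars_subst (P := fun j => j \in prop)) => i l.
rewrite inE => /eqP->; move: aL bL; rewrite /prop !mem_iota !add1n add0n.
move=> /andP[_ Ha] /andP[_ Hb]; case: (i == 1) => //=; case: (i == 2) => //=.
Qed.

Definition andF (l : seq form) : form :=
  foldr (fun a acc => App bf_and [:: a; acc]) (App bf_top [:: Var 0]) l.
Definition orF (l : seq form) : form :=
  foldr (fun a acc => App bf_or [:: a; acc]) (App bf_bot [:: Var 0]) l.

Lemma eval_andF V l : eval V (andF l) = all (eval V) l.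
Proof. elim: l => [|a l IH] /=; by rewrite ?bf_top_E ?bf_and_E ?IH. Qed.
Lemma eval_orF V l : eval V (orF l) = has (eval V) l.
Proof. elim: l => [|a l IH] /=; by rewrite ?bf_bot_E ?bf_or_E ?IH. Qed.

Lemma inPL_andF l : (forall a, a \in l -> inPL set_and_or_top_bot a) ->
  inPL set_and_or_top_bot (andF l).
Proof.
elim: l => [|a l IH] H /=; first by split=> //; do 2 right; left.
split=> //; first by left.
split; first by apply: H; rewrite inE eqxx.
split=> //; apply: IH => b Hb; apply: H; by rewrite inE Hb orbT.
Qed.

Lemma inPL_orF l : (forall a, a \in l -> inPL set_and_or_top_bot a) ->
  inPL set_and_or_top_bot (orF l).
Proof.
elim: l => [|a l IH] H /=; first by split=> //; do 3 right.
split=> //; first by right; left.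
split; first by apply: H; rewrite inE eqxx.
split=> //; apply: IH => b Hb; apply: H; by rewrite inE Hb orbT.
Qed.

Lemma mono_clone O f p : inPL O p -> rep f p -> mono p -> clone set_and_or_top_bot f.
Proof.
move=> Hp Rp Mp.
pose n := arity f.
pose g := tagged f.
have gm : forall t1 t2 : n.-tuple bool, (forall i, tnth t1 i -> tnth t2 i) -> g t1 -> g t2.
  move=> t1 t2 H.
  have E1 := Rp (fun j => tnth t1 (inord j)); have E2 := Rp (fun j => tnth t2 (inord j)).
  rewrite !tuple_inord in E1 E2; rewrite /g -E1 -E2; apply: Mp => j; exact: H.
pose F (a : n.-tuple bool) := andF [seq Var (val i) | i <- enum 'I_n & tnth a i].
pose p' := orF [seq F a | a <- enum {: n.-tuple bool} & g a].
apply: (@rep_clone _ _ p').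
  apply: inPL_orF => a /mapP[t _ ->]; apply: inPL_andF => b /mapP[i _ ->] //.
move=> V; rewrite eval_orF; apply/hasP/idP.
  move=> [x /mapP[a]]; rewrite mem_filter => /andP[ga _] -> .
  rewrite eval_andF => /allP Ha; apply: (gm a) ga => i ai.
  rewrite tnth_mktuple; apply: (Ha (Var i)); apply/mapP; exists i => //.
  by rewrite mem_filter ai mem_enum.
move=> gt; exists (F [tuple V i | i < n]).
  by apply/mapP; exists [tuple V i | i < n] => //; rewrite mem_filter gt mem_enum.
rewrite eval_andF; apply/allP => x /mapP[i]; rewrite mem_filter => /andP[Hi _] ->.
by rewrite tnth_mktuple in Hi.
Qed.

Lemma eu_clone O f p : inPL O p -> rep f p -> eu p -> clone set_not_bot f.
Proof.
move=> Hp Rp [y [u Hu]].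
have [p' [Hp' Ep']] : exists p', inPL set_not_bot p' /\ forall V, eval V p' = u (V y).
  case Ht: (u true); case Hf: (u false).
  - exists (App bf_not [:: App bf_bot [:: Var y]]); split.
      split=> //; first by left. split=> //; split=> //; by right.
    by move=> V /=; rewrite bf_bot_E bf_not_E; case: (V y).
  - exists (Var y); split=> // V /=; by case: (V y).
  - exists (App bf_not [:: Var y]); split; first by split=> //; left.
    by move=> V /=; rewrite bf_not_E; case: (V y).
  - exists (App bf_bot [:: Var y]); split; first by split=> //; right.
    by move=> V /=; rewrite bf_bot_E; case: (V y).
apply: (@rep_clone _ _ p') => // V; by rewrite Ep' -Hu Rp.
Qed.

Lemma not_c1 O : ~ (clone_le O set_and_or_top_bot \/ clone_le O set_not_bot) -> Canc O.
Proof.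
move=> H.
have [f1 Hf1] : exists f, clone O f /\ ~ clone set_and_or_top_bot f.
  apply: NNPP => K; apply: H; left => f Hf; apply: NNPP => K'; apply: K; by exists f.
have [f2 Hf2] : exists f, clone O f /\ ~ clone set_not_bot f.
  apply: NNPP => K; apply: H; right => f Hf; apply: NNPP => K'; apply: K; by exists f.
case: Hf1 => /clone_rep [p1 [Hp1 R1]] N1.
case: Hf2 => /clone_rep [p2 [Hp2 R2]] N2.
apply: (core Hp1 _ Hp2).
  by move=> M; apply: N1; apply: (mono_clone Hp1 R1 M).
by move=> M; apply: N2; apply: (eu_clone Hp2 R2 M).
Qed.

Theorem theorem3p19 (O : BF -> Prop) :
  let c1 := clone_le O set_and_or_top_bot \/ clone_le O set_not_bot in
  let c2 := forall p, inPL O p ->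
              exists E : seq example, uniquely_characterizes E p (inPL O) in
  let c3 := exists f : nat -> nat, forall (prop : seq nat) (p : form),
              inPLprop O prop p ->
              exists E : seq example, size E <= f (dag_size p) /\
                uniquely_characterizes E p (inPLprop O prop) in
  (c1 <-> c2) /\ (c1 <-> c3).
Proof.
move=> c1 c2 c3; split; split.
- move=> Hc1 p Hp; exists (exs p (undup (vars p))); apply: exs_char.
    by move=> j; rewrite mem_undup.
  move=> q Hq; exact: c1_between Hc1 q Hq _.
- move=> Hc2; apply: NNPP => nc1; exact: canc_not_c2 (not_c1 nc1) Hc2.
- move=> Hc1; exists (fun n => 2 ^ n.+1) => prop p [Hp _].
  exists (exs p (undup (vars p))); split.
    by rewrite size_exs leq_pexp2l // ltnS vars_dag.
  apply: exs_char; first by move=> j; rewrite mem_undup.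
  move=> q [Hq _]; exact: c1_between Hc1 q Hq _.
- move=> Hc3; apply: NNPP => nc1; exact: canc_not_c3 (not_c1 nc1) Hc3.
Qed.
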